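(* Let $G$ be an ordered graph, and let $e,f\in E(G)$ be edges which both contain the vertex $\mathrm{v}_G(f)$ and satisfy $\mathrm{ht}_G(f)\prec_{\mathrm{lex}}\mathrm{ht}_G(e)$. Then $e<_G f$.
   Context: An ordered graph is a finite simple graph $G$ equipped with a total order $\le_G$ on $E(G)$ and a total order $\le^V_G$ on $V(G)$. Let $\mathbb N=\{1,2,\dots\}$. Define $\preceq_{\mathrm{lex}}$ on $\mathbb N\times V(G)$ by $(i,v)\preceq_{\mathrm{lex}}(i',v')$ iff $i<i'$, or $i=i'$ and $v\le^V_G v'$. The height table $\mathrm{HT}(G)$ is a partially filled array indexed by $\mathbb N\times V(G)$, built by going through all $(i,v)$ in $\preceq_{\mathrm{lex}}$-increasing order and setting the entry at $(i,v)$ to be the $\le_G$-largest edge containing $v$ not yet entered into the table (blank if none remain). Every edge is entered exactly once; $\mathrm{ht}_G(e)=(\mathrm{h}_G(e),\mathrm{v}_G(e))$ is the position of $e$, with $\mathrm{h}_G(e)$ its row and $\mathrm{v}_G(e)$ its column. *)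

(* Defs.v *)
From mathcomp Require Import all_boot.
Set Implicit Arguments. Unset Strict Implicit. Unset Printing Implicit Defensive.

(* An ordered graph on a finite vertex type V:
   - E : the edge set, a set of 2-element subsets of V (finite simple graph);
   - leE : a total order on E (the order <=_G on edges);
   - leV : a total order on V (the order <=^V_G on vertices). *)

Definition total_order_on (T : finType) (A : {pred T}) (le : rel T) : Prop :=
  [/\ {in A, reflexive le},
      {in A &, antisymmetric le},
      {in A & &, transitive le} &
      {in A &, total le}].

Definition ordered_graph (V : finType) (E : {set {set V}})
    (leE : rel {set V}) (leV : rel V) : Prop :=
  [/\ {in E, forall e : {set V}, #|e| = 2},
      total_order_on (mem E) leE &
      total_order_on (mem [set: V]) leV].

Section HeightTable.
Variables (V : finType) (E : {set {set V}}) (leE : rel {set V}) (leV : rel V).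

Definition vseq : seq V := sort leV (enum V).

Definition pick_edge (R : {set {set V}}) (v : V) : option {set V} :=
  [pick e in R | (v \in e) && [forall e' in R, (v \in e') ==> leE e' e]].

Definition upd (R : {set {set V}}) (v : V) : {set {set V}} :=
  if pick_edge R v is Some e then R :\ e else R.

Definition row_upd (R : {set {set V}}) : {set {set V}} := foldl upd R vseq.

(* edges not yet entered just before position (i, v), for i >= 1 *)
Definition remaining (i : nat) (v : V) : {set {set V}} :=
  foldl upd (iter i.-1 row_upd E) (take (index v vseq) vseq).

(* the entry of HT(G) at position (i, v): None = blank; row 0 does not exist *)
Definition HT (i : nat) (v : V) : option {set V} :=
  if i == 0 then None else pick_edge (remaining i v) v.

End HeightTable.

Definition lex_lt (V : finType) (leV : rel V) (p q : nat * V) : bool :=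
  (p.1 < q.1) || ((p.1 == q.1) && leV p.2 q.2 && (p.2 != q.2)).

(* Main.v *)
Require Import Defs.
From mathcomp Require Import all_boot.

Section Aux.
Variables (V : finType) (E : {set {set V}}) (leE : rel {set V}) (leV : rel V).

Lemma upd_sub R v : upd leE R v \subset R.
Proof. rewrite /upd; case: (pick_edge leE R v) => // x; exact: subsetDl. Qed.

Lemma foldl_sub R s : foldl (upd leE) R s \subset R.
Proof.
elim: s R => //= x s IH R; exact: subset_trans (IH _) (upd_sub _ _).
Qed.

Lemma iter_sub m n : m <= n ->
  iter n (row_upd leE leV) E \subset iter m (row_upd leE leV) E.
Proof.
elim: n => [|n IH]; first by rewrite leqn0 => /eqP ->.
rewrite leq_eqVlt => /orP[/eqP -> //|]; rewrite ltnS => /IH.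
apply: subset_trans; rewrite iterS; exact: foldl_sub.
Qed.

Lemma take_sub R s m n : m <= n ->
  foldl (upd leE) R (take n s) \subset foldl (upd leE) R (take m s).
Proof.
move=> mn; rewrite -(cat_take_drop m (take n s)) take_takel // foldl_cat.
exact: foldl_sub.
Qed.

Lemma pick_edgeP R v f : pick_edge leE R v = Some f ->
  f \in R /\ (forall e', e' \in R -> v \in e' -> leE e' f).
Proof.
rewrite /pick_edge; case: pickP => // x /andP[xR /andP[vx /forallP H]] [<-].
split=> // e' e'R ve'; have := H e'; rewrite e'R ve' //=.
Qed.

Lemma mem_vseq v : v \in vseq leV.
Proof. by rewrite /vseq mem_sort mem_enum. Qed.

End Aux.

Theorem mainTheorem10 (V : finType) (E : {set {set V}})
    (leE : rel {set V}) (leV : rel V) (e f : {set V}) (i j : nat) (v w : V) :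
  ordered_graph E leE leV ->
  e \in E -> f \in E ->
  HT E leE leV i v = Some f ->
  HT E leE leV j w = Some e ->
  v \in e -> v \in f ->
  lex_lt leV (i, v) (j, w) ->
  leE e f && (e != f).
Proof.
case=> _ _ [reV antV trV totV] eE fE.
have reV' : reflexive leV by move=> x; apply: reV; rewrite inE.
have antV' : antisymmetric leV by move=> x y; apply: antV; rewrite inE.
have trV' : transitive leV by move=> x y z; apply: trV; rewrite inE.
have totV' : total leV by move=> x y; apply: totV; rewrite inE.
rewrite /HT; case: ifP => // /negbT i0; case: ifP => // /negbT j0.
move=> hf /pick_edgeP [eR _] ve vf lt.
move: (hf) => /pick_edgeP [fR fmax].
set R := iter i.-1 (row_upd leE leV) E.
set k := index v (vseq leV).
have kS : k < size (vseq leV) by rewrite index_mem mem_vseq.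
have Hup : foldl (upd leE) R (take k.+1 (vseq leV)) = remaining E leE leV i v :\ f.
  rewrite (take_nth v kS) -cats1 foldl_cat /= /upd.
  rewrite nth_index ?mem_vseq //.
  rewrite /remaining -/R -/k in hf *; by rewrite hf.
have key : remaining E leE leV j w \subset foldl (upd leE) R (take k.+1 (vseq leV)).
  case/orP: lt => /= [ij | /andP[/andP[/eqP eij lvw] nvw]].
    rewrite /remaining; apply: subset_trans (foldl_sub _ _ _ _) _.
    apply: subset_trans (@iter_sub _ _ _ _ i j.-1 _) _.
      by move: ij; case: (j) => // j'; rewrite ltnS.
    have -> : iter i (row_upd leE leV) E = row_upd leE leV R.
      by rewrite /R -iterS prednK // lt0n.
    rewrite /row_upd -{1}(take_size (vseq leV)).
    apply: take_sub; exact: kS.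
  rewrite /remaining -eij -/R; apply: take_sub.
  rewrite ltnNge; apply/negP => wk.
  have ss : sorted leV (vseq leV) by apply: sort_sorted.
  have := sorted_leq_nth trV' reV' v ss.
  move=> /(_ (index w (vseq leV)) k); rewrite !inE index_mem mem_vseq => /(_ isT kS wk).
  rewrite !nth_index ?mem_vseq // => lwv.
  by move: nvw; rewrite (antV' v w) ?lvw ?lwv ?eqxx.
have eRi : e \in remaining E leE leV i v :\ f by rewrite -Hup; exact: subsetP key _ eR.
move: eRi; rewrite in_setD1 => /andP[ef eRi].
by rewrite fmax.
Qed.
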